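(* Let $\mathcal{P}=(|K|,V)$ be a polyhedral model and $x_1,x_2\in|K|$. Then $x_1\equiv_\eta x_2$ if and only if $x_1\approx_\triangle x_2$.
   Context: Fix a set PL of proposition letters. A simplex $\sigma\subseteq\mathbb{R}^m$ is the convex hull of $d+1$ affinely independent points; its faces are the simplices spanned by nonempty subsets of its vertices; its relative interior (cell) is $\tilde\sigma=\{\sum_i\lambda_iv_i:\lambda_i\in(0,1],\sum_i\lambda_i=1\}$. A simplicial complex $K$ is a finite set of simplices in $\mathbb{R}^m$ closed under faces, any two of which intersect in a common face or in $\emptyset$. The polyhedron $|K|$ is the union of its simplices with the subspace topology; the cells partition $|K|$. A polyhedral model is $\mathcal{P}=(|K|,V)$ with $V:\mathrm{PL}\to\mathcal{P}(|K|)$, each $V(p)$ a union of cells. A topological path from $x$ is a continuous $\pi:[0,1]\to|K|$ with $\pi(0)=x$. SLCS$_\eta$ formulas: $\Phi::=p\mid\neg\Phi\mid\Phi_1\wedge\Phi_2\mid\eta(\Phi_1,\Phi_2)$; $x\models p$ iff $x\in V(p)$; negation, conjunction standard; $x\models\eta(\Phi_1,\Phi_2)$ iff some topological path $\pi$ from $x$ has $\pi(1)\models\Phi_2$ and $\pi(r)\models\Phi_1$ for all $r\in[0,1)$. $x_1\equiv_\eta x_2$ means $x_1,x_2$ satisfy the same SLCS$_\eta$ formulas. A weak simplicial bisimulation is a symmetric relation $B\subseteq|K|\times|K|$ such that whenever $B(x_1,x_2)$: (1) for all $p$, $x_1\in V(p)$ iff $x_2\in V(p)$; (2) for each topological path $\pi_1$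 from $x_1$ there is a topological path $\pi_2$ from $x_2$ with $B(\pi_1(1),\pi_2(1))$ and such that for all $r_2\in[0,1)$ there is $r_1\in[0,1)$ with $B(\pi_1(r_1),\pi_2(r_2))$. $x_1\approx_\triangle x_2$ iff some weak simplicial bisimulation contains $(x_1,x_2)$. *)

(* Defs.v *)
From HB Require Import structures.
From mathcomp Require Import all_boot all_order all_algebra.
From mathcomp Require Import finmap.
From mathcomp Require Import all_classical all_reals all_analysis.

Set Implicit Arguments.
Unset Strict Implicit.
Unset Printing Implicit Defensive.

Import Order.TTheory GRing.Theory Num.Theory.
Import numFieldNormedType.Exports.
Local Open Scope ring_scope.
Local Open Scope classical_set_scope.

Section Polyhedral.
Variables (R : realType) (m : nat).

Notation point := 'rV[R]_m.

(* a simplex is represented by its (finite, nonempty) set of vertices *)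
Definition aff_indep (S : {fset point}) : Prop :=
  forall l : point -> R,
    \sum_(v <- S) l v = 0 -> \sum_(v <- S) l v *: v = 0 ->
    forall v, v \in S -> l v = 0.

Definition is_simplex (S : {fset point}) : Prop :=
  S != fset0 /\ aff_indep S.

Definition hull (S : {fset point}) : set point :=
  [set x | exists l : point -> R,
     (forall v, v \in S -> 0 <= l v) /\ \sum_(v <- S) l v = 1 /\
     x = \sum_(v <- S) l v *: v].

Definition cell (S : {fset point}) : set point :=
  [set x | exists l : point -> R,
     (forall v, v \in S -> 0 < l v <= 1) /\ \sum_(v <- S) l v = 1 /\
     x = \sum_(v <- S) l v *: v].

Definition face (T S : {fset point}) : Prop := T != fset0 /\ fsubset T S.

Definition simplicial_complex (K : {fset {fset point}}) : Prop :=
  (forall S, S \in K -> is_simplex S) /\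
  (forall S T, S \in K -> face T S -> T \in K) /\
  (forall S T, S \in K -> T \in K ->
     hull S `&` hull T = set0 \/
     exists U, face U S /\ face U T /\ hull S `&` hull T = hull U).

Definition polyhedron (K : {fset {fset point}}) : set point :=
  [set x | exists2 S, S \in K & hull S x].

Variable PL : Type.

Definition polyhedral_model (K : {fset {fset point}}) (V : PL -> set point) : Prop :=
  simplicial_complex K /\
  forall p, exists A : {fset {fset point}}, fsubset A K /\
     V p = [set x | exists2 S, S \in A & cell S x].

Definition topo_path (K : {fset {fset point}}) (x : point) (pi : R -> point) : Prop :=
  {within `[0, 1], continuous pi} /\
  (forall r, 0 <= r <= 1 -> polyhedron K (pi r)) /\
  pi 0 = x.

Inductive form : Type :=
  | FAtom : PL -> form
  | FNeg : form -> form
  | FAnd : form -> form -> form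
  | FEta : form -> form -> form.

Fixpoint sat (K : {fset {fset point}}) (V : PL -> set point) (phi : form) (x : point) : Prop :=
  match phi with
  | FAtom p => V p x
  | FNeg f => ~ sat K V f x
  | FAnd f g => sat K V f x /\ sat K V g x
  | FEta f g => exists pi, topo_path K x pi /\ sat K V g (pi 1) /\
                  (forall r, 0 <= r < 1 -> sat K V f (pi r))
  end.

Definition logic_equiv K V (x1 x2 : point) : Prop :=
  forall phi, sat K V phi x1 <-> sat K V phi x2.

Definition weak_simplicial_bisim K (V : PL -> set point) (B : point -> point -> Prop) : Prop :=
  (forall x1 x2, B x1 x2 -> polyhedron K x1 /\ polyhedron K x2) /\
  (forall x1 x2, B x1 x2 -> B x2 x1) /\
  (forall x1 x2, B x1 x2 ->
     (forall p, V p x1 <-> V p x2) /\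
     (forall pi1, topo_path K x1 pi1 ->
        exists pi2, topo_path K x2 pi2 /\ B (pi1 1) (pi2 1) /\
          forall r2, 0 <= r2 < 1 -> exists r1, 0 <= r1 < 1 /\ B (pi1 r1) (pi2 r2))).

Definition weak_bisimilar K V (x1 x2 : point) : Prop :=
  exists B, weak_simplicial_bisim K V B /\ B x1 x2.

End Polyhedral.

(* Main.v *)
Require Import Defs.
From HB Require Import structures.
From mathcomp Require Import all_boot all_order all_algebra.
From mathcomp Require Import finmap.
From mathcomp Require Import all_classical all_reals all_analysis.
From mathcomp Require Import lra.
Import Order.TTheory GRing.Theory Num.Theory.
Import numFieldNormedType.Exports.
Local Open Scope ring_scope.
Local Open Scope classical_set_scope.

Definition clamp {R : realType} (r : R) : R := Num.min 1 (Num.max 0 r).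

Lemma clamp_cont (R : realType) : continuous (@clamp R).
Proof.
move=> r; rewrite /clamp.
apply: (@continuous_min R R (fun=> 1) (fun r => Num.max 0 r)).
  exact: cst_continuous.
apply: (@continuous_max R R (fun=> 0) id); first exact: cst_continuous.
by move=> ?; apply: cvg_id.
Qed.

Lemma clamp01 (R : realType) (r : R) : 0 <= clamp r <= 1.
Proof. rewrite /clamp; apply/andP; split.
- by rewrite le_min ler01 le_max lexx.
- by rewrite ge_min lexx.
Qed.

Lemma aff_cont (R : realType) (a b : R) : continuous (fun r : R => a * r + b).
Proof.
move=> r; apply: cvgD; last exact: cvg_cst.
apply: cvgM; [exact: cvg_cst | exact: cvg_id].
Qed.

Lemma clamp_id (R : realType) (r : R) : 0 <= r <= 1 -> clamp r = r.
Proof. move=> /andP[a b]; rewrite /clamp minEle maxEle; case: ifP; case: ifP => //; lra. Qed.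
Lemma clamp_le0 (R : realType) (r : R) : r <= 0 -> clamp r = 0.
Proof. move=> a; rewrite /clamp minEle maxEle; case: ifP; case: ifP => //; lra. Qed.
Lemma clamp_ge1 (R : realType) (r : R) : 1 <= r -> clamp r = 1.
Proof. move=> a; rewrite /clamp minEle maxEle; case: ifP; case: ifP => //; lra. Qed.

Lemma comp_within {T U : topologicalType} (A : set T) (f : T -> U) (g : T -> T) :
  {within A, continuous f} -> continuous g -> (forall x, A (g x)) ->
  continuous (f \o g).
Proof.
move=> /subspace_continuousP cf cg gA x.
have := cf _ (gA x) => H W /H HW.
have := cg x _ HW; rewrite /= nbhs_simpl /=.
apply: filterS => y /= Hy; exact: Hy (gA y).
Qed.

Section S.
Variables (R : realType) (m : nat).
Implicit Types S T U : {fset 'rV[R]_m}.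

Lemma cell_hull S : cell S `<=` hull S.
Proof.
move=> x [l [Hl [H1 H2]]]; exists l; split=> // v vS.
by case/andP: (Hl v vS) => /ltW.
Qed.

Lemma cell_conv S x y t : cell S x -> cell S y -> 0 <= t <= 1 ->
  cell S (x + t *: (y - x)).
Proof.
move=> [lx [Hx [Sx ->]]] [ly [Hy [Sy ->]]] /andP[t0 t1].
exists (fun v => lx v + t * (ly v - lx v)); split; [|split].
- move=> v vS; have /andP[a0 a1] := Hx v vS; have /andP[b0 b1] := Hy v vS.
  apply/andP; split; nra.
- rewrite big_split /= -mulr_sumr sumrB Sx Sy; lra.
- rewrite -sumrB scaler_sumr -big_split /=; apply: eq_bigr => v _.
  by rewrite scalerDl -scalerBl scalerA.
Qed.
Local Open Scope fset_scope.
Lemma bary_unique S (l l' : 'rV[R]_m -> R) : aff_indep S ->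
  \sum_(v <- S) l v = \sum_(v <- S) l' v ->
  \sum_(v <- S) l v *: v = \sum_(v <- S) l' v *: v ->
  forall v, v \in S -> l v = l' v.
Proof.
move=> ai e1 e2 v vS; apply/eqP; rewrite -subr_eq0; apply/eqP.
apply: (ai (fun v => l v - l' v)) => //.
  by rewrite sumrB e1 subrr.
under eq_bigr => w _ do rewrite scalerBl.
by rewrite sumrB e2 subrr.
Qed.

Lemma ext_coords (Z : zmodType) S U (l : 'rV[R]_m -> R) (F : R -> 'rV[R]_m -> Z) :
  U `<=` S -> (forall v, F 0 v = 0) ->
  \sum_(v <- S) F (if v \in U then l v else 0) v = \sum_(v <- U) F (l v) v.
Proof.
move=> US F0; rewrite -(big_fset_incl _ US); last first.
  by move=> v _ /negbTE ->; rewrite F0.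
by rewrite big_seq [RHS]big_seq; apply: eq_bigr => v ->.
Qed.

Lemma cell_face_eq (S U : {fset 'rV[R]_m}) (x : 'rV[R]_m) : is_simplex S -> face U S -> cell S x -> hull U x -> S = U.
Proof.
move=> [_ ai] [_ US] [l [Hl [s1 ex]]] [l' [Hl' [s1' ex']]].
apply/eqP; rewrite eqEfsubset US andbT; apply/fsubsetP => v vS.
apply/negPn/negP => vU.
pose l'' := fun w => if w \in U then l' w else 0.
have e1 : \sum_(w <- S) l w = \sum_(w <- S) l'' w.
  by rewrite s1 (@ext_coords _ S U l' (fun a _ => a)) //.
have e2 : \sum_(w <- S) l w *: w = \sum_(w <- S) l'' w *: w.
  by rewrite -ex (@ext_coords _ S U l' (fun a w => a *: w)) // => w; rewrite scale0r.
have := @bary_unique S _ _ ai e1 e2 v vS; rewrite /l'' (negbTE vU).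
by have /andP[/gt_eqF] := Hl v vS; rewrite eq_sym => /eqP + _ H; apply; rewrite H.
Qed.

Lemma cell_unique (K : {fset {fset 'rV[R]_m}}) S S1 (x : 'rV[R]_m) :
  simplicial_complex K -> S \in K -> S1 \in K -> cell S x -> cell S1 x -> S = S1.
Proof.
move=> [Hs [_ Hi]] SK S1K cx cx1.
case: (Hi S S1 SK S1K) => [H0|[U [fS [fS1 HU]]]].
  have : (hull S `&` hull S1)%classic x by split; apply: cell_hull.
  by rewrite H0.
have hx : hull U x by rewrite -HU; split; apply: cell_hull.
by rewrite (@cell_face_eq S U x (Hs _ SK) fS cx hx) (@cell_face_eq S1 U x (Hs _ S1K) fS1 cx1 hx).
Qed.

Lemma cell_poly (K : {fset {fset 'rV[R]_m}}) S (x : 'rV[R]_m) :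
  S \in K -> cell S x -> polyhedron K x.
Proof. by move=> SK /cell_hull hx; exists S. Qed.

Lemma poly_cell (K : {fset {fset 'rV[R]_m}}) (x : 'rV[R]_m) :
  simplicial_complex K -> polyhedron K x -> exists2 T, T \in K & cell T x.
Proof.
move=> [_ [Hf _]] [S SK [l [Hl [s1 ex]]]].
pose T := [fset v in S | l v != 0].
have TS : T `<=` S by apply: fset_sub.
have out : forall v, v \in S -> v \notin T -> l v = 0.
  by move=> v vS; rewrite !inE /= vS /= negbK => /eqP.
have sT : \sum_(v <- T) l v = 1.
  by rewrite (big_fset_incl _ TS) // => v vS vT; rewrite out.
have eT : x = \sum_(v <- T) l v *: v.
  by rewrite ex (big_fset_incl _ TS) // => v vS vT; rewrite out // scale0r.
have T0 : T != fset0.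
  by apply/negP => /eqP T0; move: sT; rewrite T0 big_nil => /eqP; rewrite eq_sym oner_eq0.
exists T; first by apply: (Hf S) => //; split.
exists l; split; last by split.
move=> v vT.
have vS : v \in S by apply: (fsubsetP TS).
have nz : l v != 0 by move: vT; rewrite !inE /= => /andP[].
apply/andP; split; first by rewrite lt_def nz Hl.
rewrite -sT (big_fsetD1 _ vT) /= lerDl big_seq; apply: sumr_ge0 => i.
by move=> /fsetD1P [_ iT]; apply: Hl; apply: (fsubsetP TS).
Qed.

Local Open Scope ring_scope.
Lemma glue_path (K : {fset {fset 'rV[R]_m}}) S (x y : 'rV[R]_m) pi :
  S \in K -> cell S x -> cell S y -> topo_path K x pi ->
  exists pi', topo_path K y pi' /\ pi' 1 = pi 1 /\
   forall r, 0 <= r < 1 -> cell S (pi' r) \/ exists2 r', 0 <= r' < 1 & pi' r = pi r'.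
Proof.
move=> SK cx cy [cpi [ppi pi0]].
pose g := fun r : R => clamp (2 * r + -1).
pose h := fun r : R => 1 - clamp (2 * r + 0).
have gA : forall r, `[0, 1]%classic (g r).
  by move=> r; rewrite /= in_itv /=; apply: clamp01.
have key : forall r, 0 <= r <= 1 ->
   cell S (pi (g r) + h r *: (y - x)) \/
   (pi (g r) + h r *: (y - x) = pi (g r) /\ (r < 1 -> g r < 1)).
  move=> r /andP[r0 r1]; have [r2|r2] := leP (2 * r) 1.
    left; rewrite /g clamp_le0; last lra.
    rewrite pi0; apply: cell_conv => //.
    have /andP[c0 c1] := @clamp01 R (2 * r + 0); rewrite /h; apply/andP; split; lra.
  right; rewrite /h clamp_ge1; last lra.
  rewrite subrr scale0r addr0; split => // r1'.
  rewrite /g clamp_id; lra.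
have gc : continuous g.
  by move=> r; exact: (continuous_comp (@aff_cont R 2 (-1) r) (@clamp_cont R _)).
have hc : continuous h.
  move=> r; apply: cvgB; first exact: cvg_cst.
  exact: (continuous_comp (@aff_cont R 2 0 r) (@clamp_cont R _)).
exists (fun r => pi (g r) + h r *: (y - x)); split; [split; [|split]|split].
- apply: continuous_subspaceT => r; apply: cvgD.
    exact: (@comp_within _ _ _ pi g cpi gc gA r).
  exact: cvgZr_tmp (hc r).
- move=> r r01; have /andP[r0 r1] := r01; case: (key r r01) => [/cell_poly|[-> _]].
    by apply.
  by apply: ppi; have := gA r; rewrite /= in_itv.
- rewrite /g /h clamp_le0; last lra.
  by rewrite mulr0 add0r clamp_id ?ler01 ?lexx // subr0 scale1r pi0 addrC subrK.
- rewrite /g /h clamp_id; last lra.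
  rewrite (@clamp_ge1 R (2 * 1 + 0)); last lra.
  have -> : (2 * 1 - 1 : R) = 1 by lra.
  by rewrite subrr scale0r addr0.
- move=> r /andP[r0 r1]; have r01 : 0 <= r <= 1 by apply/andP; split => //; exact: ltW.
  case: (key r r01) => [?|[-> lt]]; [by left | right].
  exists (g r) => //; have := gA r; rewrite /= in_itv /= => /andP[-> _].
  by rewrite lt.
Qed.

Variable PL : Type.
Implicit Types (K : {fset {fset 'rV[R]_m}}) (V : PL -> set 'rV[R]_m).

Lemma sat_cell K V (phi : Defs.form PL) S (x y : 'rV[R]_m) :
  polyhedral_model K V -> S \in K -> cell S x -> cell S y ->
  sat K V phi x -> sat K V phi y.
Proof.
move=> [sc pv] SK; elim: phi x y => [p|f IH|f IHf g IHg|f IHf g IHg] x y cx cy /=.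
- have [A [AK ->]] := pv p; move=> [S1 S1A c1]; exists S1 => //.
  have S1K : S1 \in K by apply: (fsubsetP AK).
  by rewrite (@cell_unique K S1 S x sc S1K SK c1 cx).
- by move=> nf fy; apply: nf; apply: (IH y x).
- by move=> [??]; split; [apply: (IHf x y) | apply: (IHg x y)].
- move=> [pi [tp [sg sf]]].
  have [pi' [tp' [e1 Hr]]] := @glue_path K S x y pi SK cx cy tp.
  exists pi'; split => //; split; first by rewrite e1.
  move=> r r01; case: (Hr r r01) => [c|[r' r'01 ->]]; last exact: sf.
  apply: (IHf x) => //; have <- : pi 0 = x by case: tp => _ [].
  by apply: sf; rewrite lexx ltr01.
Qed.

Lemma bisim_sat K V B (phi : Defs.form PL) :
  weak_simplicial_bisim K V B -> forall x y, B x y -> sat K V phi x -> sat K V phi y.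
Proof.
move=> [_ [Bs Bt]]; elim: phi => [p|f IH|f IHf g IHg|f IHf g IHg] x y Bxy /=.
- by move/(proj1 (Bt x y Bxy) p).
- by move=> nf fy; apply: nf; apply: (IH y x) => //; apply: Bs.
- by move=> [??]; split; [apply: (IHf x y) | apply: (IHg x y)].
- move=> [pi [tp [sg sf]]].
  have [pi2 [tp2 [B1 Hr]]] := (proj2 (Bt x y Bxy)) pi tp.
  exists pi2; split => //; split; first exact: (IHg _ _ B1).
  move=> r2 r2in; have [r1 [r1in Br]] := Hr r2 r2in.
  exact: (IHf _ _ Br (sf r1 r1in)).
Qed.
End S.

Section Char.
Variables (R : realType) (m : nat) (PL : Type).
Variables (K : {fset {fset 'rV[R]_m}}) (V : PL -> set 'rV[R]_m).
Hypothesis pm : polyhedral_model K V.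
Variable p0 : PL.
Local Notation fm := (Defs.form PL).
Local Notation sat := (sat K V).

Definition ftt : fm := FNeg (FAnd (FAtom p0) (FNeg (FAtom p0))).
Definition fff : fm := FNeg ftt.
Definition for_ (a b : fm) : fm := FNeg (FAnd (FNeg a) (FNeg b)).
Definition bigand {T : Type} (l : seq T) (F : T -> fm) : fm :=
  foldr (fun S acc => FAnd (F S) acc) ftt l.
Definition bigor {T : Type} (l : seq T) (F : T -> fm) : fm :=
  foldr (fun S acc => for_ (F S) acc) fff l.

Lemma sat_tt z : sat ftt z.
Proof. by move=> /= [? ?]. Qed.

Lemma sat_bigand (T : eqType) (l : seq T) F z :
  sat (bigand l F) z <-> forall S, S \in l -> sat (F S) z.
Proof.
elim: l => [|a l IH] /=; first by split => // _; apply: sat_tt.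
split.
  by move=> [Ha /IH Hl] S; rewrite inE => /orP[/eqP -> //|]; apply: Hl.
move=> H; split; first by apply: H; rewrite inE eqxx.
by apply/IH => S Sl; apply: H; rewrite inE Sl orbT.
Qed.

Lemma sat_bigor (T : eqType) (l : seq T) F z :
  sat (bigor l F) z <-> exists2 S, S \in l & sat (F S) z.
Proof.
elim: l => [|a l IH] /=.
  by split => [H|[]//]; exfalso; apply: H; apply: sat_tt.
split.
  move=> H; case: (pselect (sat (F a) z)) => [Ha|Ha]; first by exists a; rewrite ?inE ?eqxx.
  case: (pselect (sat (bigor l F) z)) => [/IH [S Sl HS]|Hl].
    by exists S; rewrite // inE Sl orbT.
  by exfalso; apply: H; split.
move=> [S]; rewrite inE => /orP[/eqP -> HS|Sl HS] [H1 H2]; first by apply: H1.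
by apply: H2; apply/IH; exists S.
Qed.

Definition dprop (y : 'rV[R]_m) (S : {fset 'rV[R]_m}) (phi : fm) : Prop :=
  sat phi y /\ forall z, cell S z -> ~ sat phi z.

Definition delta (y : 'rV[R]_m) (S : {fset 'rV[R]_m}) : fm :=
  match pselect (exists phi, dprop y S phi) with
  | left H => projT1 (cid H)
  | right _ => ftt
  end.

Lemma delta_self y S : sat (delta y S) y.
Proof.
rewrite /delta; case: pselect => [H|_]; last exact: sat_tt.
by case: (projT2 (cid H)).
Qed.

Definition chi (y : 'rV[R]_m) : fm := bigand (enum_fset K) (delta y).

Lemma chi_self y : sat (chi y) y.
Proof. by apply/sat_bigand => S _; apply: delta_self. Qed.

Lemma chi_equiv y z : polyhedron K z -> sat (chi y) z -> logic_equiv K V y z.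
Proof.
move=> pz sz; apply: contrapT => ne.
have [phi Hphi] : exists phi, sat phi y /\ ~ sat phi z.
  apply: contrapT => H; apply: ne => phi; split => Hp.
    by apply: contrapT => Hz; apply: H; exists phi.
  apply: contrapT => Hy; apply: H; exists (FNeg phi); split; first exact: Hy.
  by move=> /= /(_ Hp).
have [T TK cz] := @poly_cell R m K z pm.1 pz.
have ex : exists phi, dprop y T phi.
  exists phi; split; first exact: Hphi.1.
  by move=> w cw sw; apply: Hphi.2; apply: (@sat_cell R m PL K V phi T w z pm TK cw cz sw).
have := (proj1 (sat_bigand _ _ _ _) sz) T TK.
rewrite /delta; case: pselect => [H|//].
by case: (projT2 (cid H)) => _ /(_ z cz).
Qed.

Definition Brel (a b : 'rV[R]_m) : Prop :=
  polyhedron K a /\ polyhedron K b /\ logic_equiv K V a b.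

Lemma Brel_bisim : weak_simplicial_bisim K V Brel.
Proof.
split; first by move=> a b [? [? _]].
split.
  by move=> a b [pa [pb e]]; split => //; split => // phi; split => /(e phi).
move=> a b [pa [pb e]]; split; first by move=> p; apply: (e (FAtom p)).
move=> pi1 tp1.
have p1 : forall r, 0 <= r <= 1 -> polyhedron K (pi1 r) by case: tp1 => _ [].
pose psi (S : {fset 'rV[R]_m}) : fm :=
  match pselect (exists r, 0 <= r < 1 /\ cell S (pi1 r)) with
  | left H => chi (pi1 (projT1 (cid H)))
  | right _ => fff
  end.
pose F1 := bigor (enum_fset K) psi.
have s1 : sat (FEta F1 (chi (pi1 1))) a.
  exists pi1; split => //; split; first exact: chi_self.
  move=> r r01; have /andP[r0 r1] := r01.
  have [T TK cT] := @poly_cell R m K (pi1 r) pm.1 (p1 r (andb_true_intro (conj r0 (ltW r1)))).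
  apply/sat_bigor; exists T => //; rewrite /psi; case: pselect => [H|H]; last first.
    by exfalso; apply: H; exists r.
  case: (projT2 (cid H)) => _ cr.
  exact: (@sat_cell R m PL K V _ T _ _ pm TK cr cT (chi_self _)).
have [pi2 [tp2 [s21 s2r]]] := proj1 (e _) s1.
have p2 : forall r, 0 <= r <= 1 -> polyhedron K (pi2 r) by case: tp2 => _ [].
have i1 : (0 : R) <= (1 : R) <= 1 by rewrite ler01 lexx.
exists pi2; split => //; split.
  split; first exact: p1.
  split; first exact: p2.
  exact: chi_equiv (p2 _ i1) s21.
move=> r2 r2in; have /andP[r20 r21] := r2in.
have p2r : polyhedron K (pi2 r2) by apply: p2; rewrite r20 ltW.
have [S SK] := proj1 (sat_bigor _ _ _ _) (s2r r2 r2in).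
rewrite /psi; case: pselect => [H|H]; last by move=> /= []; apply: sat_tt.
case: (projT2 (cid H)) => r1in _ sc.
exists (projT1 (cid H)); split => //; split.
  by apply: p1; case/andP: r1in => -> /ltW ->.
split => //; exact: chi_equiv p2r sc.
Qed.
End Char.

Section Empty.
Variables (R : realType) (m : nat) (PL : Type).
Variables (K : {fset {fset 'rV[R]_m}}) (V : PL -> set 'rV[R]_m).
Hypothesis nPL : ~ (exists p : PL, True).

Lemma Bempty : weak_simplicial_bisim K V (fun a b => polyhedron K a /\ polyhedron K b).
Proof.
split; first by [].
split; first by move=> a b [].
move=> a b [pa pb]; split; first by move=> p; exfalso; apply: nPL; exists p.
move=> pi1 [_ [p1 e1]].
exists (fun=> b); split.
  split; first by apply: continuous_subspaceT => r; apply: cvg_cst.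
  by split.
split; first by split => //; apply: p1; rewrite ?ler01 ?lexx.
move=> r2 _; exists 0; rewrite lexx ltr01; split => //; split => //.
by apply: p1; rewrite ?lexx ?ler01.
Qed.
End Empty.

Theorem theorem2 (R : realType) (m : nat) (PL : Type)
  (K : {fset {fset 'rV[R]_m}}) (V : PL -> set 'rV[R]_m)
  (x1 x2 : 'rV[R]_m) :
  polyhedral_model K V ->
  polyhedron K x1 -> polyhedron K x2 ->
  (logic_equiv K V x1 x2 <-> weak_bisimilar K V x1 x2).
Proof.
move=> pm px1 px2; split.
  move=> e; case: (pselect (exists p : PL, True)) => [[p0 _]|nPL].
    by exists (@Brel R m PL K V); split; [exact: (@Brel_bisim R m PL K V pm p0) | split].
  by exists (fun a b => polyhedron K a /\ polyhedron K b); split; [exact: (@Bempty R m PL K V nPL)|].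
move=> [B [HB Bx]] phi; split; first exact: (@bisim_sat R m PL K V B phi HB _ _ Bx).
apply: (@bisim_sat R m PL K V B phi HB); case: HB => _ [Bs _]; exact: Bs.
Qed.
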